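(* Let $(y_1,y_2,q)\in\widetilde{\mathbb G}_3$ with $|y_2|\le|y_1|$. Then $$\frac{|3y_2-3\bar y_1q|+|y_1y_2-9q|}{9-|y_1|^2}\le\frac{|3y_1-3\bar y_2q|+|y_1y_2-9q|}{9-|y_2|^2}.$$
   Context: $\mathbb D$ is the open unit disc. $\widetilde{\mathbb G}_3=\{(\beta_1+\bar\beta_2q,\ \beta_2+\bar\beta_1q,\ q): q\in\mathbb D,\ \beta_1,\beta_2\in\mathbb C,\ |\beta_1|+|\beta_2|<3\}$. *)

(* Defs.v *)
From mathcomp Require Import all_boot all_order all_algebra.
From mathcomp Require Export complex.
Set Implicit Arguments. Unset Strict Implicit. Unset Printing Implicit Defensive.
Import Order.TTheory GRing.Theory Num.Theory.
Local Open Scope ring_scope.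
Local Open Scope complex_scope.

Definition cmod (R : rcfType) (z : R[i]) : R := Normc.normc z.

Definition Gtilde3 (R : rcfType) (y1 y2 q : R[i]) : Prop :=
  cmod q < 1 /\
  exists b1 b2 : R[i], cmod b1 + cmod b2 < 3 /\
    y1 = b1 + (b2^*)%C * q /\ y2 = b2 + (b1^*)%C * q.

(* Main.v *)
Require Import Defs.
From mathcomp Require Import all_boot all_order all_algebra.
From mathcomp Require Import complex.
Import Order.TTheory GRing.Theory Num.Theory.
From mathcomp Require Import ring lra.
Local Open Scope ring_scope.

Lemma key (R : realFieldType) (a b r P D : R) : 0<=a -> 0<=b -> 0<=r -> r<1 -> a+b<3 ->
 P <= a*b*r -> 0<=D ->
 D^+2 = (9 - a^+2 - b^+2 - a*b*(1-r^+2) - 2*P)^+2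
   - (9 - a^+2 - b^+2 - 2*(a*b))*(1-r^+2)*(9 - a^+2 - b^+2 - 2*(a*b) + 2*(a*b) - 2*P) ->
 b^+2 + a^+2*r^+2 + 2*P <= a^+2 + b^+2*r^+2 + 2*P ->
 (3*b*(1-r^+2) + D) / (9 - (a^+2 + b^+2*r^+2 + 2*P))
   <= (3*a*(1-r^+2) + D)/(9 - (b^+2 + a^+2*r^+2+2*P)).
Proof.
move=> ha hb hr hr1 hab hP hD hD2 hy.
set s := 1 - r^+2.
have hs : 0 < s by rewrite /s; nra.
have hbr : b * r <= b by nra.
have har : a * r <= a by nra.
have habr : a*b*r <= a*b by nra.
have hu : 0 < 9 - (a^+2 + b^+2*r^+2 + 2*P).
  have : a + b*r < 3 by lra.
  have : 0 <= a + b*r by nra.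
  move=> h0 h3.
  have : (a + b*r)^+2 < 9 by nra.
  nra.
have hv : 0 < 9 - (b^+2 + a^+2*r^+2 + 2*P).
  have : b + a*r < 3 by lra.
  have : 0 <= b + a*r by nra.
  move=> h0 h3.
  have : (b + a*r)^+2 < 9 by nra.
  nra.
have hba : b <= a.
  have h1 : (a^+2 - b^+2) * s >= 0 by rewrite /s; lra.
  have h2 : a^+2 - b^+2 >= 0.
    nra.
  nra.
set L := 9 - a^+2 - b^+2 - a*b*s - 2*P.
set K := 9 - a^+2 - b^+2 - 2*(a*b).
have hK : 0 < K by rewrite /K; nra.
have hL : K <= L.
  rewrite /L /K /s.
  have : 0 <= a*b*(1-r)^+2 by apply: mulr_ge0; nra.
  nra.
have hK2 : 0 <= K + 2*(a*b) - 2*P by nra.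
have hDL : D <= L.
  have : D^+2 <= L^+2.
    rewrite hD2 -/s -/L -/K.
    have : 0 <= K * s * (K + 2 * (a * b) - 2 * P).
      by apply: mulr_ge0 => //; apply: mulr_ge0; lra.
    lra.
  nra.
have h3L : (a+b)*D <= 3*L by nra.
rewrite ler_pdivrMr // [X in _ <= X]mulrAC ler_pdivlMr //.
have e : (3 * a * s + D) * (9 - (a ^+ 2 + b ^+ 2 * r ^+ 2 + 2 * P)) -
  (3 * b * s + D) * (9 - (b ^+ 2 + a ^+ 2 * r ^+ 2 + 2 * P))
  = s * (a - b) * (3 * L - (a+b)*D) by rewrite /L /s; ring.
rewrite -subr_ge0 e.
apply: mulr_ge0; last lra.
apply: mulr_ge0; lra.
Qed.

Section S.
Variable R : rcfType.
Local Open Scope complex_scope.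
Lemma natC (n : nat) : (n%:R : R[i]) = (n%:R +i* 0).
Proof. by rewrite complexr0 rmorph_nat. Qed.
Lemma cmodE (x y : R) : cmod (x +i* y) = Num.sqrt (x^+2 + y^+2).
Proof. by []. Qed.
Lemma cmod2 (x y : R) : cmod (x +i* y) ^+ 2 = x^+2 + y^+2.
Proof. by rewrite cmodE sqr_sqrtr // addr_ge0 // sqr_ge0. Qed.
Lemma cmod_ge0 (z : R[i]) : 0 <= cmod z.
Proof. by case: z => x y; rewrite cmodE sqrtr_ge0. Qed.
Lemma cmod_eq (z : R[i]) (w : R) : 0 <= w -> cmod z ^+ 2 = w ^+ 2 -> cmod z = w.
Proof. by move=> hw h; apply/eqP; rewrite -(eqrXn2 (n:=2)) ?cmod_ge0 // h. Qed.
End S.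

Theorem mainTheorem15 (R : rcfType) (y1 y2 q : R[i]) :
  Gtilde3 y1 y2 q -> cmod y2 <= cmod y1 ->
  (cmod (3 * y2 - 3 * (y1^*)%C * q) + cmod (y1 * y2 - 9 * q)) / (9 - cmod y1 ^+ 2)
  <= (cmod (3 * y1 - 3 * (y2^*)%C * q) + cmod (y1 * y2 - 9 * q)) / (9 - cmod y2 ^+ 2).
Proof.
move=> [hq [b1 [b2 [hb [e1 e2]]]]] hy.
move: hq hb hy; subst y1 y2.
case: b1 => p1 p2; case: b2 => c1 c2; case: q => t1 t2.
set a := cmod (p1 +i* p2)%C; set b := cmod (c1 +i* c2)%C; set r := cmod (t1 +i* t2)%C.
move=> hr hab hy.
set P := (p1*c1 - p2*c2)*t1 + (p1*c2+p2*c1)*t2.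
have F1 : cmod ((p1 +i* p2)%C + ((c1 +i* c2)%C^*)%C * (t1 +i* t2)%C) ^+ 2
   = a^+2 + b^+2 * r^+2 + 2*P.
  by rewrite /a /b /r /P; simpc; rewrite !cmod2; ring.
have F2 : cmod ((c1 +i* c2)%C + ((p1 +i* p2)%C^*)%C * (t1 +i* t2)%C) ^+ 2
   = b^+2 + a^+2 * r^+2 + 2*P.
  by rewrite /a /b /r /P; simpc; rewrite !cmod2; ring.
have ha0 : 0 <= a by apply: cmod_ge0.
have hb0 : 0 <= b by apply: cmod_ge0.
have hr0 : 0 <= r by apply: cmod_ge0.
have ha2 : a^+2 = p1^+2 + p2^+2 by rewrite /a cmod2.
have hb2 : b^+2 = c1^+2 + c2^+2 by rewrite /b cmod2.
have hr2 : r^+2 = t1^+2 + t2^+2 by rewrite /r cmod2.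
have F3 : cmod (3 * ((c1 +i* c2)%C + ((p1 +i* p2)%C^*)%C * (t1 +i* t2)%C)
     - 3 * (((p1 +i* p2)%C + ((c1 +i* c2)%C^*)%C * (t1 +i* t2)%C)^*)%C * (t1 +i* t2)%C)
   = 3 * b * (1 - r^+2).
  apply: cmod_eq; first by apply: mulr_ge0; nra.
  by rewrite !natC; simpc; rewrite !exprMn hb2 hr2 cmod2; ring.
have F4 : cmod (3 * ((p1 +i* p2)%C + ((c1 +i* c2)%C^*)%C * (t1 +i* t2)%C)
     - 3 * (((c1 +i* c2)%C + ((p1 +i* p2)%C^*)%C * (t1 +i* t2)%C)^*)%C * (t1 +i* t2)%C)
   = 3 * a * (1 - r^+2).
  apply: cmod_eq; first by apply: mulr_ge0; nra.
  by rewrite !natC; simpc; rewrite !exprMn ha2 hr2 cmod2; ring.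
set D := cmod (((p1 +i* p2)%C + ((c1 +i* c2)%C^*)%C * (t1 +i* t2)%C)
   * ((c1 +i* c2)%C + ((p1 +i* p2)%C^*)%C * (t1 +i* t2)%C) - 9 * (t1 +i* t2)%C).
have hD0 : 0 <= D by apply: cmod_ge0.
have hn : (a*b)^+2 = (p1^+2 + p2^+2) * (c1^+2 + c2^+2) by rewrite exprMn ha2 hb2.
have FD : D^+2 = (9 - a^+2 - b^+2 - a*b*(1-r^+2) - 2*P)^+2
   - (9 - a^+2 - b^+2 - 2*(a*b))*(1-r^+2)*(9 - a^+2 - b^+2 - 2*(a*b) + 2*(a*b) - 2*P).
  rewrite /D !natC; simpc; rewrite cmod2 ha2 hb2 hr2 /P.
  clearbody a b r; apply/eqP; rewrite -subr_eq0; apply/eqP.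
  apply: (@eq_trans R _ ((1 - (t1^+2 + t2^+2))^+2 * ((p1^+2 + p2^+2) * (c1^+2 + c2^+2) - (a*b)^+2))).
    ring.
  by rewrite hn subrr mulr0.
have hP : P <= a*b*r.
  have hQ : P^+2 + ((p1*c2+p2*c1)*t1 - (p1*c1-p2*c2)*t2)^+2 = (a*b*r)^+2.
    by rewrite !exprMn ha2 hb2 hr2 /P; ring.
  have : 0 <= a*b*r by apply: mulr_ge0 => //; apply: mulr_ge0.
  have : 0 <= ((p1*c2+p2*c1)*t1 - (p1*c1-p2*c2)*t2)^+2 by apply: sqr_ge0.
  nra.
have hy2 : cmod ((c1 +i* c2)%C + ((p1 +i* p2)%C^*)%C * (t1 +i* t2)%C) ^+ 2 <=
  cmod ((p1 +i* p2)%C + ((c1 +i* c2)%C^*)%C * (t1 +i* t2)%C) ^+ 2.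
  by rewrite !expr2; apply: ler_pM => //; apply: cmod_ge0.
rewrite F1 F2 in hy2.
rewrite F1 F2 F3 F4.
by apply: key.
Qed.
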